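(* For a mixed graph $M_G$ the following are equivalent: (a) $\rho(M_G)<\sqrt2$; (b) $\rho(M_G)\le 1$; (c) every connected component of $M_G$ is an undirected edge, an arc, or an isolated vertex.
   Context: A mixed graph $M_G$ is obtained from a finite simple graph $G$ by orienting the edges of some subset of $E(G)$; its components are those of $G$ with the inherited orientations. With $\omega=\frac{1+\mathbf{i}\sqrt3}{2}$, $N(M_G)$ has $(u,v)$-entry $\omega$ if $\overrightarrow{uv}$ is an arc, $\bar\omega$ if $\overrightarrow{vu}$ is an arc, $1$ for an undirected edge, $0$ otherwise. The spectral radius $\rho(M_G)$ is the maximum absolute value of an eigenvalue of $N(M_G)$. *)

(* Defs.v *)
From HB Require Import structures.
From mathcomp Require Import all_boot all_order all_algebra all_field.
Set Implicit Arguments. Unset Strict Implicit. Unset Printing Implicit Defensive.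
Import Order.TTheory GRing.Theory Num.Theory.
Local Open Scope ring_scope.

(* A mixed graph on the vertex set 'I_n: an underlying finite simple graph
   [adj] (symmetric, irreflexive) together with a set of arcs [arc]
   orienting some of its edges (each oriented edge gets exactly one
   direction). *)
Definition mixed_graph (n : nat) (adj arc : rel 'I_n) : Prop :=
  [/\ symmetric adj, irreflexive adj,
      (forall u v, arc u v -> adj u v) &
      (forall u v, arc u v -> ~~ arc v u)].

Definition undirected_edge (n : nat) (adj arc : rel 'I_n) (u v : 'I_n) : bool :=
  [&& adj u v, ~~ arc u v & ~~ arc v u].

Definition omega : algC := (1 + 'i * sqrtC 3) / 2.

Definition mixed_matrix (n : nat) (adj arc : rel 'I_n) : 'M[algC]_n :=
  \matrix_(u, v)
    (if arc u v then omega
     else if arc v u then omega^*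
     else if adj u v then 1 else 0).

(* The eigenvalues (with multiplicity) of a square complex matrix:
   the roots of its characteristic polynomial. *)
Definition spectrum (n : nat) (A : 'M[algC]_n) : seq algC :=
  sval (closed_field_poly_normal (char_poly A)).

Definition spectral_radius (n : nat) (A : 'M[algC]_n) : algC :=
  \big[Num.max/0]_(z <- spectrum A) `|z|.

Definition component (n : nat) (adj : rel 'I_n) (u : 'I_n) : {set 'I_n} :=
  [set v | connect adj u v].

Definition components_trivial (n : nat) (adj arc : rel 'I_n) : Prop :=
  forall u : 'I_n,
    #|component adj u| = 1%N \/
    exists v w : 'I_n, component adj u = [set v; w] /\
      (undirected_edge adj arc v w \/ arc v w).

(* Main.v *)
Require Import Defs.
From HB Require Import structures.
From mathcomp Require Import all_boot all_order all_algebra all_field.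
From mathcomp Require Import sesquilinear spectral ring.
Import Order.TTheory GRing.Theory Num.Theory.
Local Open Scope ring_scope.

Lemma bigmax_ge (s : seq algC) z : z \in s -> `|z| <= \big[Num.max/0]_(x <- s) `|x|.
Proof.
have R0 : forall s : seq algC, \big[Num.max/0]_(x <- s) `|x| \is Num.real.
  by move=> t; apply: bigmax_real => // i _; apply: normr_real.
elim: s => // a s IH; rewrite inE big_cons => /orP[/eqP->|/IH h].
  by case: (real_leP (normr_real a) (R0 s)) => // /ltW.
by case: (real_leP (normr_real a) (R0 s)) => // /ltW/(le_trans h).
Qed.

Lemma bigmax_le (s : seq algC) c : 0 <= c -> (forall z, z \in s -> `|z| <= c) ->
  \big[Num.max/0]_(x <- s) `|x| <= c.
Proof.
have R0 : forall s : seq algC, \big[Num.max/0]_(x <- s) `|x| \is Num.real.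
  by move=> t; apply: bigmax_real => // i _; apply: normr_real.
move=> c0; elim: s => [|a s IH] H; first by rewrite big_nil.
rewrite big_cons; case: (real_leP (normr_real a) (R0 s)) => _.
  by apply: IH => z zs; apply: H; rewrite inE zs orbT.
by apply: H; rewrite inE eqxx.
Qed.

Lemma spectrumP n (A : 'M[algC]_n) z : eigenvalue A z -> z \in spectrum A.
Proof.
rewrite eigenvalue_root_char /spectrum; case: closed_field_poly_normal => r /= ->.
rewrite (monicP (char_poly_monic A)) scale1r.
by rewrite root_prod_XsubC.
Qed.
Lemma conj_omega : omega^* = (1 - 'i * sqrtC 3) / 2.
Proof.
rewrite /omega fmorph_div rmorphD rmorphM /= conjCi rmorph1 rmorph_nat.
rewrite (conj_Creal (ger0_real _)) ?sqrtC_ge0 ?ler0n //.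
by rewrite mulNr.
Qed.

Lemma norm_omega : `|omega| = 1.
Proof.
have h : `|omega| ^+ 2 = 1.
  rewrite normCK conj_omega /omega.
  have i2 : 'i * 'i = -1 :> algC by rewrite -expr2 sqrCi.
  have s3 : sqrtC 3 * sqrtC 3 = 3 :> algC by rewrite -expr2 sqrtCK.
  have ->: (1 + 'i * sqrtC 3) / 2 * ((1 - 'i * sqrtC 3) / 2) =
     (1 - ('i * 'i) * (sqrtC 3 * sqrtC 3)) / 4 :> algC.
    by field.
  by rewrite i2 s3; field.
by apply/eqP; rewrite -(@sqrp_eq1 _ `|omega|) ?h.
Qed.
Lemma normN n (adj arc : rel 'I_n) : mixed_graph adj arc -> forall u v,
  `|mixed_matrix adj arc u v| = (adj u v)%:R.
Proof.
case=> sym irr arcadj asym u v; rewrite mxE.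
case: ifP => [/arcadj->|_]; first by rewrite norm_omega.
case: ifP => [h|_]; first by rewrite norm_conjC norm_omega sym arcadj.
by case: (adj u v); rewrite ?normr1 ?normr0.
Qed.

Lemma hermN n (adj arc : rel 'I_n) : mixed_graph adj arc -> forall u v,
  mixed_matrix adj arc v u = (mixed_matrix adj arc u v)^*.
Proof.
case=> sym irr arcadj asym u v; rewrite !mxE.
case: ifP => [h|_].
  by rewrite (negbTE (asym _ _ h)) conjCK.
case: ifP => [h|_]; first by [].
by rewrite sym; case: (adj u v); rewrite ?rmorph1 ?rmorph0.
Qed.

Lemma eig_le1 n (adj arc : rel 'I_n) : mixed_graph adj arc ->
  (forall v a b, adj v a -> adj v b -> a = b) ->
  forall z, eigenvalue (mixed_matrix adj arc) z -> `|z| <= 1.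
Proof.
move=> G D z /eigenvalueP [x xN xnz].
set N := mixed_matrix adj arc in xN.
set S := \sum_i `|x 0 i|.
have S0 : 0 <= S by apply: sumr_ge0 => i _.
have Spos : 0 < S.
  rewrite lt_def S0 andbT; apply/eqP => /psumr_eq0P H.
  move/eqP: xnz; apply; apply/rowP => i; rewrite mxE.
  by apply/eqP; rewrite -normr_eq0 H.
have row1 : forall k, \sum_i `|N k i| <= 1.
  move=> k; case: (pickP (adj k)) => [i0 hi0|none].
    rewrite (bigD1 i0) //= big1 ?addr0 ?normN ?hi0 //.
    move=> i ne; rewrite /N normN //.
    by case h: (adj k i) => //; rewrite (D _ _ _ h hi0) eqxx in ne.
  by rewrite big1 ?ler01 // => i _; rewrite /N normN // none.
have : `|z| * S <= 1 * S.
  rewrite mulr_sumr.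
  have -> : \sum_i `|z| * `|x 0 i| = \sum_i `|(x *m N) 0 i|.
    by apply: eq_bigr => i _; rewrite xN mxE normrM.
  apply: (le_trans (y := \sum_i \sum_k `|x 0 k| * `|N k i|)).
    apply: ler_sum => i _; rewrite mxE.
    apply: (le_trans (ler_norm_sum _ _ _)).
    by apply: ler_sum => k _; rewrite normrM.
  rewrite exchange_big /= mul1r; apply: ler_sum => k _.
  rewrite -mulr_sumr; apply: ler_piMr => //.
by rewrite ler_pM2r.
Qed.

Lemma rho_ge n (adj arc : rel 'I_n) : mixed_graph adj arc ->
  forall v a b, adj v a -> adj v b -> a != b ->
  sqrtC 2 <= spectral_radius (mixed_matrix adj arc).
Proof.
move=> G v a b ha hb ab.
set N := mixed_matrix adj arc; set r := spectral_radius N.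
have herm : (N ^t*)%sesqui = N.
  apply/matrixP => i j; move: (hermN _ _ _ G i j); rewrite !mxE => ->; by rewrite conjCK.
have nN : N \is normalmx by apply/normalmxP; rewrite herm.
have hN := orthomx_spectralP nN.
set P := spectralmx N in hN *; set d := spectral_diag N in hN *.
have Pu : P \is unitarymx := spectral_unitarymx N.
have PPt : P *m (P ^t*)%sesqui = 1%:M := unitarymxP Pu.
have PtP : (P ^t*)%sesqui *m P = 1%:M.
  by rewrite -(invmx_unitary Pu) mulVmx ?spectral_unit.
have NE : N = (P ^t*)%sesqui *m diag_mx d *m P by rewrite -invmx_unitary.
have eig : forall j, `|d 0 j| <= r.
  move=> j; apply: bigmax_ge; apply: spectrumP; apply/eigenvalueP.
  exists (row j P).
    rewrite -row_mul NE !mulmxA PPt mul1mx mul_diag_mx.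
    by apply/rowP => k; rewrite !mxE.
  apply/eqP => h0; have := congr1 (fun M => (M *m (P ^t*)%sesqui) 0 j) h0.
  by rewrite /= -row_mul PPt mul0mx !mxE eqxx /= => /eqP; rewrite oner_eq0.
have r0 : 0 <= r := le_trans (normr_ge0 _) (eig v).
have key : (N *m N) v v = \sum_k `|N v k| ^+ 2.
  by rewrite mxE; apply: eq_bigr => k _; rewrite normCK (hermN _ _ _ G v k).
have ge2 : 2 <= \sum_k `|N v k| ^+ 2.
  rewrite (bigD1 a) //= (bigD1 b) /=; last by rewrite eq_sym ab.
  rewrite /N !(normN _ _ _ G) ha hb expr1n addrA lerDl.
  by apply: sumr_ge0 => i _; exact: (exprn_ge0 2 (normr_ge0 _)).
have spec : (N *m N) v v =
    \sum_j (P j v)^* * (d 0 j * (d 0 j * P j v)).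
  rewrite NE !mulmxA -[(P ^t*)%sesqui *m diag_mx d *m P *m (P ^t*)%sesqui]mulmxA.
  rewrite PPt mulmx1 -!mulmxA !mul_diag_mx mxE; apply: eq_bigr => j _.
  by rewrite !mxE.
have bound : `|(N *m N) v v| <= r ^+ 2.
  rewrite spec; apply: (le_trans (ler_norm_sum _ _ _)).
  apply: (le_trans (y := \sum_j r ^+ 2 * `|P j v| ^+ 2)).
    apply: ler_sum => j _; rewrite !normrM norm_conjC.
    have dd : `|d 0 j| * `|d 0 j| <= r * r by apply: ler_pM.
    have -> : `|P j v| * (`|d 0 j| * (`|d 0 j| * `|P j v|)) =
       (`|d 0 j| * `|d 0 j|) * (`|P j v| ^+ 2) by rewrite expr2; ring.
    by rewrite expr2; apply: ler_wpM2r => //; exact: (exprn_ge0 2 (normr_ge0 _)).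
  rewrite -mulr_sumr.
  have -> : \sum_j `|P j v| ^+ 2 = ((P ^t*)%sesqui *m P) v v.
    by rewrite mxE; apply: eq_bigr => j _; rewrite normCK mulrC !mxE.
  by rewrite PtP mxE eqxx mulr1.
have h2 : 2 <= r ^+ 2.
  apply: le_trans bound; rewrite ger0_norm key //.
  exact: le_trans ge2.
rewrite -(sqrCK r0) ler_sqrtC // ?nnegrE ?exprn_ge0 //.
Qed.

Lemma comp_deg n (adj arc : rel 'I_n) : mixed_graph adj arc ->
  components_trivial adj arc <-> (forall v a b, adj v a -> adj v b -> a = b).
Proof.
case=> sym irr arcadj asym; split.
  move=> CT v a b ha hb; apply/eqP; apply/negPn/negP => ab.
  have va : v != a by apply/eqP => e; rewrite -e irr in ha.
  have vb : v != b by apply/eqP => e; rewrite -e irr in hb.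
  have iv : v \in component adj v by rewrite inE connect0.
  have ia : a \in component adj v by rewrite inE connect1.
  have ib : b \in component adj v by rewrite inE connect1.
  case: (CT v) => [c1|[x [y [E _]]]].
    have : (1 < #|component adj v|)%N by apply/card_gt1P; exists v, a.
    by rewrite c1.
  move: iv ia ib va vb ab; rewrite E !inE.
  by case/orP=> /eqP ->; case/orP=> /eqP ->; case/orP => /eqP ->; rewrite ?eqxx.
move=> D u; case: (pickP (adj u)) => [w hw|none].
  right.
  have E : component adj u = [set u; w].
    apply/setP => x; rewrite inE; apply/idP/idP; last first.
      by rewrite !inE; case/orP=> /eqP ->; [exact: connect0 | exact: connect1].
    move=> cx.
    have step : forall y z, adj y z -> y \in [set u; w] -> z \in [set u; w].
      move=> y z hyz; rewrite !inE; case/orP=> /eqP e; subst y.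
        by rewrite (D _ _ _ hyz hw) eqxx orbT.
      by rewrite (D _ _ _ hyz (etrans (sym w u) hw)) eqxx.
    have cl : closed adj (mem [set u; w]).
      move=> y z hyz; apply/idP/idP; first exact: step.
      by apply: step; rewrite sym.
    by rewrite -(closed_connect cl cx) !inE eqxx.
  case hu: (arc u w); first by exists u, w; split => //; right.
  case hw': (arc w u).
    by exists w, u; split; [rewrite E setUC | right].
  by exists u, w; split => //; left; rewrite /undirected_edge hw hu hw'.
left.
have -> : component adj u = [set u].
  apply/setP => x; rewrite inE in_set1; apply/idP/idP; last first.
    by move/eqP ->; exact: connect0.
  move=> cx.
  have cl : closed adj (mem [set u]).
    move=> y z hyz; rewrite !in_set1.
    case: (eqVneq y u) => [e|yu]; first by subst y; rewrite none in hyz.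
    case: (eqVneq z u) => [e|zu] //; subst z; by rewrite sym none in hyz.
  by move: (closed_connect cl cx); rewrite !inE eqxx => h; rewrite -h.
by rewrite cards1.
Qed.

Lemma spectrum_eig n (A : 'M[algC]_n) z : z \in spectrum A -> eigenvalue A z.
Proof.
rewrite eigenvalue_root_char /spectrum; case: closed_field_poly_normal => r /= ->.
by rewrite (monicP (char_poly_monic A)) scale1r root_prod_XsubC.
Qed.

Lemma one_lt_sqrt2 : (1 : algC) < sqrtC 2.
Proof. by rewrite -{1}(sqrtC1 algC) ltr_sqrtC ?nnegrE ?ler01 ?ler0n ?ltr1n. Qed.

Theorem theorem6p4 (n : nat) (adj arc : rel 'I_n) :
  mixed_graph adj arc ->
  (spectral_radius (mixed_matrix adj arc) < sqrtC 2 <->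
     spectral_radius (mixed_matrix adj arc) <= 1) /\
  (spectral_radius (mixed_matrix adj arc) <= 1 <->
     components_trivial adj arc).
Proof.
move=> G; have CD := comp_deg _ _ _ G.
set r := spectral_radius _.
have h12 := one_lt_sqrt2.
case: (boolP [forall v, forall a, forall b, adj v a ==> adj v b ==> (a == b)]) => H.
  have D : forall v a b, adj v a -> adj v b -> a = b.
    move=> v a b ha hb; apply/eqP.
    by move/forallP: H => /(_ v)/forallP/(_ a)/forallP/(_ b); rewrite ha hb.
  have r1 : r <= 1.
    apply: bigmax_le; first exact: ler01.
    by move=> z /spectrum_eig; apply: eig_le1.
  split; [split|split] => // _; [exact: le_lt_trans r1 h12 | exact/CD].
have [v [a [b [ha hb ab]]]] : exists v a b, [/\ adj v a, adj v b & a != b].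
  case/forallPn: H => v /forallPn [a /forallPn [b]].
  case ha: (adj v a) => //=; case hb: (adj v b) => //= nab; by exists v, a, b.
have rg := rho_ge _ _ _ G v a b ha hb ab.
have nr1 : ~ (r <= 1).
  by move=> r1; have := lt_le_trans h12 (le_trans rg r1); rewrite ltxx.
have nr2 : ~ (r < sqrtC 2) by move=> h; have := lt_le_trans h rg; rewrite ltxx.
split; split => // h; try by exfalso.
by move/CD: h => D; move: ab; rewrite (D _ _ _ ha hb) eqxx.
Qed.
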